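(* Fix a cell with no source term ($S=0$) and total energy $E=1$, a positive integer $N_{obj}$, $w_{obj}=1/N_{obj}$, and an initial population $X_0$ of $N_0\le N_{obj}$ particles with positive weights summing to $1$. Apply repeatedly the cell-based population control step with conservative splitting described in the context, and let $X_l=(X_l^1,\dots,X_l^{N_l})$ be the (positive) weights after $l$ iterations. Then: (1) for every $l\ge1$, $\dfrac{\max_j\{X_l^j: X_l^j\neq0\}}{\min_j\{X_l^j: X_l^j\neq0\}}\le4$; (2) for every $l\ge0$, $N_l\le 6N_{obj}$; (3) for every $l\ge1$, $\min_j\{X_l^j: X_l^j\neq0\}\ge w_{obj}/10$.
   Context: Cell-based population control step for a single cell with existing particle weights $w_1,\dots,w_N$, $E=\sum_pw_p$, source $S\ge0$, target number $N_{obj}\ge1$ and $E+S>0$: set $w_{obj}=(E+S)/N_{obj}$; if $S>0$ emit $N^{vol}=\max(1,\lfloor S/w_{obj}\rfloor)$ particles of weight $S/N^{vol}$. If $E>0$, for each existing particle draw independently $u_p\sim\mathcal U(0,1)$, $I_p=\lfloor w_p/w_{obj}\rfloor$, $R_p=w_p/w_{obj}-I_p$; if $I_p=0$ (Russian Roulette) the particle is killed if $R_p<u_p$, otherwise its weight becomes $w_{obj}$; if $I_p\ge1$ (conservative Splitting) it is replaced by $N^{split}_p=I_p+\mathbf 1_{\{u_p<R_p\}}$ copies each of weight $w_p/N^{split}_p$. Then all weights are multiplied by a common factor so that the total is $E+S$. Non-void correction: if $S=0$ and no particle remains, the population becomes one particle of weight $E$. Successive iterations use fresh independent uniform variables. 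*)

(* Defs.v *)
From mathcomp Require Import all_boot all_order all_algebra.
From mathcomp Require Import reals.
Set Implicit Arguments. Unset Strict Implicit. Unset Printing Implicit Defensive.
Import Order.TTheory GRing.Theory Num.Theory.
Local Open Scope ring_scope.

Section PC.
Variable R : realType.

(* Treatment of one existing particle of weight w, with uniform draw u,
   target weight wobj: Russian roulette if I = 0, conservative splitting
   otherwise. *)
Definition process_particle (wobj w u : R) : seq R :=
  let x := w / wobj in
  let I := Num.floor x in
  let Rp := x - I%:~R in
  if I == 0 then (if Rp < u then [::] else [:: wobj])
  else let nsplit := (absz I + (u < Rp)%R)%N in
       nseq nsplit (w / nsplit%:R).

(* One cell-based population control step.  ws = existing weights,
   S = source, Nobj = target number, u p = uniform draw for particle p. *)
Definition pc_step (Nobj : nat) (S : R) (ws : seq R) (u : nat -> R) : seq R :=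
  let E := \sum_(w <- ws) w in
  let wobj := (E + S) / Nobj%:R in
  let Nvol := maxn 1 (absz (Num.floor (S / wobj))) in
  let src := if 0 < S then nseq Nvol (S / Nvol%:R) else [::] in
  let ex := if 0 < E then
              flatten [seq process_particle wobj (nth 0 ws p) (u p)
                      | p <- iota 0 (size ws)]
            else [::] in
  let pre := src ++ ex in
  if (S == 0) && (pre == [::]) then [:: E]
  else let T := \sum_(w <- pre) w in [seq w * ((E + S) / T) | w <- pre].

(* Population after l iterations with S = 0; u l p is the uniform draw used
   for particle p at iteration l+1. *)
Fixpoint population (Nobj : nat) (X0 : seq R) (u : nat -> nat -> R) (l : nat)
  : seq R :=
  match l with
  | 0 => X0
  | l'.+1 => pc_step Nobj 0 (population Nobj X0 u l') (u l')
  end.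

End PC.

(* Main.v *)
Require Import Defs.
From mathcomp Require Import all_boot all_order all_algebra.
From mathcomp Require Import reals.
From mathcomp Require Import ring lra zify.
Import Order.TTheory GRing.Theory Num.Theory.
Local Open Scope ring_scope.

Section Aux.
Variable R : realType.

Lemma sum_nseq (m : nat) (y : R) : \sum_(z <- nseq m y) z = m%:R * y.
Proof. elim: m => [|m IH]; first by rewrite big_nil mul0r.
by rewrite /= big_cons IH mulrSr mulrDl mul1r addrC. Qed.

Lemma pp_props (wobj w u : R) : 0 < wobj -> 0 < w -> 0 < u < 1 ->
  [/\ forall y, y \in process_particle wobj w u -> wobj / 2 < y < 2 * wobj,
      (size (process_particle wobj w u))%:R <= 1 + (2 / wobj) * w :> R,
      \sum_(y <- process_particle wobj w u) y <= w + wobj &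
      w < wobj -> (size (process_particle wobj w u) <= 1)%N /\
                  forall y, y \in process_particle wobj w u -> y = wobj].
Proof.
move=> wo0 w0 /andP[u0 u1].
rewrite /process_particle.
set x := w / wobj.
have x0 : 0 < x by rewrite divr_gt0.
have hw : w = x * wobj by rewrite /x mulrVK // unitfE gt_eqF.
set I := Num.floor x.
have Ile : I%:~R <= x by rewrite -floor_ge_int.
have Igt : x < (I + 1)%:~R by rewrite -floor_lt_int ltzD1.
have I0 : 0 <= I by rewrite floor_ge0 ltW.
rewrite intrD in Igt.
have hpos : 0 <= 2 / wobj * w by rewrite mulr_ge0 // ?divr_ge0 // ltW.
case: eqP => [IE|/eqP IN].
  have xl : x < 1 by move: Igt; rewrite IE /=; lra.
  case: ifP => _.
    split => //.
    all: try (by rewrite big_nil; lra).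
    all: try (by rewrite /= ?mulr0n ?mulr1n; lra).
  split.
  - by move=> y; rewrite inE => /eqP ->; lra.
  - by rewrite /= ?mulr1n; lra.
  - by rewrite big_cons big_nil; lra.
  - by move=> _; split => // y; rewrite inE => /eqP.
have I1 : 1 <= I by rewrite -gtz0_ge1 lt_neqAle eq_sym IN I0.
have I1r : 1 <= I%:~R :> R by rewrite ler1z.
have kE : (`|I|%N)%:R = I%:~R :> R by rewrite natr_absz ger0_norm.
set b := (u < x - I%:~R).
set n := (`|I| + b)%N.
have nE : n%:R = I%:~R + (b%:R) :> R by rewrite natrD kE.
have b01 : (b%:R = 0 :> R) \/ (b%:R = 1 :> R /\ u < x - I%:~R).
  by case hb: b; [right; split => //; rewrite -hb | left].
have npos : 0 < n%:R :> R by rewrite nE; case: b01 => [->|[-> _]]; lra.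
have hy : (w / n%:R) * n%:R = w by rewrite mulrVK // unitfE gt_eqF.
set y := w / n%:R in hy *.
split.
- move=> z /nseqP[-> _].
  rewrite hw nE in hy.
  case: b01 => [h|[h hu]]; rewrite h in hy; apply/andP; split; nra.
- have -> : 2 / wobj * w = 2 * x by rewrite /x; ring.
  rewrite size_nseq -/x nE; case: b01 => [->|[-> _]]; lra.
- by rewrite sum_nseq mulrC hy; lra.
- rewrite hw => h; exfalso; nra.
Qed.

Lemma size_flattenR (A : seq (seq R)) :
  (size (flatten A))%:R = \sum_(s <- A) (size s)%:R :> R.
Proof. by elim: A => [|s A IH]; rewrite ?big_nil ?big_cons //= size_cat natrD IH. Qed.

Lemma sum_const_seq (T : Type) (s : seq T) (c : R) :
  \sum_(i <- s) c = (size s)%:R * c.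
Proof. elim: s => [|a s IH]; first by rewrite big_nil mul0r.
by rewrite big_cons IH /= mulrSr mulrDl mul1r addrC. Qed.

Lemma step_props (Nobj : nat) (ws : seq R) (u : nat -> R) :
  (0 < Nobj)%N -> (forall w, w \in ws -> 0 < w) -> \sum_(w <- ws) w = 1 ->
  (forall p, 0 < u p < 1) ->
  [/\ forall y, y \in pc_step Nobj 0 ws u -> 0 < y,
     \sum_(y <- pc_step Nobj 0 ws u) y = 1,
     exists2 t, 0 < t & forall y, y \in pc_step Nobj 0 ws u ->
                  (1 / Nobj%:R) / 2 < t * y < 2 * (1 / Nobj%:R),
     (size (pc_step Nobj 0 ws u) <= size ws + 2 * Nobj)%N /\
     ((forall w, w \in ws -> w < 1 / Nobj%:R) -> (size (pc_step Nobj 0 ws u) <= size ws)%N) &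
     (forall y, y \in pc_step Nobj 0 ws u ->
        ((1 / Nobj%:R) / 2) / (1 + (size ws)%:R * (1 / Nobj%:R)) <= y) /\
     ((forall w, w \in ws -> w < 1 / Nobj%:R) -> forall y, y \in pc_step Nobj 0 ws u ->
        (1 / Nobj%:R) / (1 + (size ws)%:R * (1 / Nobj%:R)) <= y)].
Proof.
move=> N0 wpos ws1 hu.
rewrite /pc_step ws1 addr0 ltxx ltr01 eqxx /=.
set wobj := 1 / Nobj%:R.
set n := size ws.
set F := flatten _.
have Nr : 0 < Nobj%:R :> R by rewrite ltr0n.
have wo0 : 0 < wobj by rewrite /wobj divr_gt0.
have wo1 : wobj <= 1 by rewrite /wobj ler_pdivrMr // mul1r ler1n.
have n1 : (0 < n)%N.
  rewrite /n; case: (ws) ws1 => [|a s] //; rewrite big_nil => /eqP.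
  by rewrite eq_sym oner_eq0.
have nr0 : 0 <= n%:R * wobj by rewrite mulr_ge0 // ltW.
have hp : forall p, p \in iota 0 n ->
   [/\ forall y, y \in process_particle wobj ws`_p (u p) -> wobj / 2 < y < 2 * wobj,
      (size (process_particle wobj ws`_p (u p)))%:R <= 1 + (2 / wobj) * ws`_p :> R,
      \sum_(y <- process_particle wobj ws`_p (u p)) y <= ws`_p + wobj &
      ws`_p < wobj -> (size (process_particle wobj ws`_p (u p)) <= 1)%N /\
                  forall y, y \in process_particle wobj ws`_p (u p) -> y = wobj].
  move=> p; rewrite mem_iota add0n => /andP[_ pn].
  by apply: pp_props => //; apply: wpos; apply: mem_nth.
have sumw : \sum_(p <- iota 0 n) ws`_p = 1.
  by rewrite -ws1 [X in _ = X](big_nth 0) /index_iota subn0.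
have hF : forall y, y \in F -> wobj / 2 < y < 2 * wobj.
  move=> y /flattenP[s /mapP[p pin ->]] ys.
  by have [h _ _ _] := hp p pin; apply: h.
have hsz : (size F)%:R <= n%:R + 2 * Nobj%:R :> R.
  rewrite size_flattenR big_map.
  apply: (le_trans (y := \sum_(p <- iota 0 n) (1 + (2 / wobj) * ws`_p))).
    rewrite big_seq [X in _ <= X]big_seq; apply: ler_sum => p pin.
    by have [_ h _ _] := hp p pin.
  rewrite big_split /= sum_const_seq size_iota -mulr_sumr sumw mulr1 mulr1.
  by rewrite /wobj invf_div divr1 lexx.
have hsum : \sum_(y <- F) y <= 1 + n%:R * wobj.
  rewrite big_flatten /= big_map.
  apply: (le_trans (y := \sum_(p <- iota 0 n) (ws`_p + wobj))).
    rewrite big_seq [X in _ <= X]big_seq; apply: ler_sum => p pin.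
    by have [_ _ h _] := hp p pin.
  by rewrite big_split /= sumw sum_const_seq size_iota.
have hR : (forall w, w \in ws -> w < wobj) ->
    (size F <= n)%N /\ forall y, y \in F -> y = wobj.
  move=> hw; split.
    rewrite -(ler_nat R) size_flattenR big_map.
    apply: (le_trans (y := \sum_(p <- iota 0 n) 1)).
      rewrite big_seq [X in _ <= X]big_seq; apply: ler_sum => p pin.
      have [_ _ _ h] := hp p pin.
      have pn : (p < size ws)%N by move: pin; rewrite mem_iota add0n => /andP[].
      have [h1 _] := h (hw _ (mem_nth 0 pn)).
      by rewrite lern1.
    by rewrite sum_const_seq size_iota mulr1.
  move=> y /flattenP[s /mapP[p pin ->]] ys.
  have [_ _ _ h] := hp p pin.
  have pn : (p < size ws)%N by move: pin; rewrite mem_iota add0n => /andP[].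
  have [_ h2] := h (hw _ (mem_nth 0 pn)).
  exact: h2.
case: eqP => [F0|/eqP Fn0].
  split.
  - by move=> y; rewrite inE => /eqP ->; exact: ltr01.
  - by rewrite big_cons big_nil addr0.
  - exists wobj => // y; rewrite inE => /eqP ->; rewrite mulr1; lra.
  - by split => [|_] /=; rewrite ?n1 // (leq_trans n1) // leq_addr.
  - split => [y|_ y]; rewrite inE => /eqP ->; rewrite ler_pdivrMr ?mul1r; lra.
have T0 : 0 < \sum_(w0 <- F) w0.
  move: Fn0 hF; case: (F) => [|a s] // _ hF'.
  rewrite big_cons; have := hF' a (mem_head _ _).
  have : 0 <= \sum_(j <- s) j.
    rewrite big_seq; apply: sumr_ge0 => i iin.
    by have := hF' i; rewrite inE iin orbT => /(_ isT); lra.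
  lra.
set T := \sum_(w0 <- F) w0 in T0 hsum *.
have hy : forall y, y \in [seq w * (1 / T) | w <- F] ->
    exists2 p, p \in F & y = p * (1 / T) /\ (p * (1 / T)) * T = p.
  move=> y /mapP[p pin ->]; exists p => //; split => //.
  by rewrite mul1r mulfVK // gt_eqF.
split.
- move=> y /hy[p /hF pF [-> _]]; rewrite mulr_gt0 // ?divr_gt0 //; lra.
- by rewrite big_map -mulr_suml mul1r divff // gt_eqF.
- exists T => // y /hy[p /hF pF [-> e]]; by rewrite [T * _]mulrC e.
- rewrite size_map; split.
    by rewrite -(ler_nat R) natrD natrM.
  by move=> /hR[].
- split.
    move=> y /hy[p /hF pF [-> e]]; set q := p * (1 / T) in e *.
    rewrite ler_pdivrMr; last lra.
    have q0 : 0 < q by rewrite /q mulr_gt0 // ?divr_gt0 //; lra.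
    nra.
  move=> /hR[_ hall] y /hy[p /hall pF [-> e]]; set q := p * (1 / T) in e *.
  rewrite ler_pdivrMr; last lra.
  have q0 : 0 < q by rewrite /q mulr_gt0 // ?divr_gt0 //; lra.
  nra.
Qed.
End Aux.

Lemma nw_le (R : realType) (Nobj n k : nat) : (0 < Nobj)%N ->
  (n%:R * (1 / Nobj%:R) <= k%:R :> R) = (n <= k * Nobj)%N.
Proof.
move=> N0; have Nr : 0 < Nobj%:R :> R by rewrite ltr0n.
by rewrite mulrA mulr1 ler_pdivrMr // -natrM ler_nat.
Qed.

Lemma nw_lt (R : realType) (Nobj n k : nat) : (0 < Nobj)%N ->
  (n%:R * (1 / Nobj%:R) < k%:R :> R) = (n < k * Nobj)%N.
Proof.
move=> N0; have Nr : 0 < Nobj%:R :> R by rewrite ltr0n.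
by rewrite mulrA mulr1 ltr_pdivrMr // -natrM ltr_nat.
Qed.

Theorem lemma5 (R : realType) (Nobj : nat) (X0 : seq R) (u : nat -> nat -> R) :
  (0 < Nobj)%N ->
  (size X0 <= Nobj)%N ->
  (forall x, x \in X0 -> 0 < x) ->
  \sum_(x <- X0) x = 1 ->
  (forall l p, 0 < u l p < 1) ->
  [/\ (forall l, (1 <= l)%N -> forall x y,
          x \in population Nobj X0 u l -> y \in population Nobj X0 u l ->
          x != 0 -> y != 0 -> x / y <= 4),
      (forall l, (size (population Nobj X0 u l) <= 6 * Nobj)%N) &
      (forall l, (1 <= l)%N -> forall x,
          x \in population Nobj X0 u l -> x != 0 ->
          (1 / Nobj%:R) / 10 <= x)].
Proof.
move=> N0 hs0 hpos0 hsum0 hu.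
have Nr : 0 < Nobj%:R :> R by rewrite ltr0n.
have wo0 : 0 < 1 / Nobj%:R :> R by rewrite divr_gt0.
have key : forall l,
  [/\ forall x, x \in population Nobj X0 u l.+1 -> 0 < x,
      \sum_(x <- population Nobj X0 u l.+1) x = 1,
      (size (population Nobj X0 u l.+1) <= 6 * Nobj)%N,
      (exists2 t, 0 < t & forall y, y \in population Nobj X0 u l.+1 ->
                  (1 / Nobj%:R) / 2 < t * y < 2 * (1 / Nobj%:R)) &
      forall x, x \in population Nobj X0 u l.+1 -> (1 / Nobj%:R) / 10 <= x].
  elim => [|l [a b c [t t0 ht] _]].
    rewrite [population _ _ _ _]/=.
    have [a b c [d _] [f _]] := @step_props R Nobj X0 (u 0) N0 hpos0 hsum0 (hu 0).
    split => //.
      by apply: (leq_trans d); lia.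
    move=> x xin; have := f x xin.
    have : (size X0)%:R * (1 / Nobj%:R) <= 1%:R :> R by rewrite nw_le // mul1n.
    have : 0 <= (size X0)%:R * (1 / Nobj%:R) :> R by rewrite mulr_ge0 // ltW.
    set k := _ * _; set wo := 1 / _ => k0 k1 h.
    apply: le_trans h; rewrite ler_pdivlMr; last lra.
    have w0' : 0 < wo by exact: wo0.
    nra.
  set X := population Nobj X0 u l.+1.
  change (population Nobj X0 u l.+2) with (pc_step Nobj 0 X (u l.+1)).
  have [a' b' c' [d e] [f g]] := @step_props R Nobj _ (u l.+1) N0 a b (hu l.+1).
  have n0 : 0 <= (size X)%:R * (1 / Nobj%:R) :> R by rewrite mulr_ge0 // ltW.
  have [t2|t2] := lerP 2 t.
    have hw : forall w, w \in X -> w < 1 / Nobj%:R.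
      move=> w win; have := ht w win; have := a w win; move=> w0 /andP[_ h2]; nra.
    split => //.
      exact: (leq_trans (e hw)).
    move=> x xin; have := g hw x xin.
    have : (size X)%:R * (1 / Nobj%:R) <= 6%:R :> R by rewrite nw_le.
    set k := _ * _; set wo := 1 / _ => k1 h.
  have k0 : 0 <= k by exact: n0.
    apply: le_trans h; rewrite ler_pdivlMr; last lra.
    have w0' : 0 < wo by exact: wo0.
    nra.
  have hnt : (size X)%:R * ((1 / Nobj%:R) / 2) <= t.
    have -> : t = \sum_(x <- X) t * x by rewrite -mulr_sumr b mulr1.
    rewrite -sum_const_seq big_seq [X in _ <= X]big_seq; apply: ler_sum => x xin.
    by have /andP[h _] := ht x xin; apply: ltW.
  have hn4 : (size X)%:R * (1 / Nobj%:R) < 4%:R :> R by lra.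
  rewrite nw_lt // in hn4.
  split => //.
    by apply: (leq_trans d); rewrite /X in hn4 *; lia.
  move=> x xin; have := f x xin.
  have : (size X)%:R * (1 / Nobj%:R) < 4%:R :> R by rewrite nw_lt.
  set k := _ * _; set wo := 1 / _ => k1 h.
  have k0 : 0 <= k by exact: n0.
  apply: le_trans h; rewrite ler_pdivlMr; last lra.
  have w0' : 0 < wo by exact: wo0.
  nra.
split.
- case => // l _ x y xin yin _ _.
  have [a _ _ [t t0 ht] _] := key l.
  have x0 := a x xin; have y0 := a y yin.
  rewrite ler_pdivrMr //.
  have /andP[_ hx] := ht x xin; have /andP[hy _] := ht y yin.
  nra.
- case => [|l]; first by apply: (leq_trans hs0); lia.
  by have [_ _ h _ _] := key l.
- case => // l _ x xin _.
  by have [_ _ _ _ h] := key l; apply: h.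
Qed.
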